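(* Let $\mathcal H$ be a finite-dimensional Hilbert space and $\mathcal T\subset\mathcal S(\mathcal H)$ a set of quantum states. Then $\mathcal T$ does not allow for a proof of contextuality of quantum theory if and only if $\mathcal T$ is commutative (i.e. $\rho\rho'=\rho'\rho$ for all $\rho,\rho'\in\mathcal T$).
   Context: A set of states $\mathcal T$ does not allow for a proof of contextuality of quantum theory if there exist a POVM $\{G_\lambda\}_\lambda$ and states $\{\sigma_\lambda\}_\lambda$ on $\mathcal H$ (finite index set) such that $\mathrm{tr}[\rho M_k]=\sum_\lambda \mathrm{tr}[\rho G_\lambda]\mathrm{tr}[\sigma_\lambda M_k]$ for all $\rho\in\mathcal T$, all POVMs $\{M_k\}_k$ on $\mathcal H$ and all $k$; equivalently, $\rho=\sum_\lambda\mathrm{tr}[\rho G_\lambda]\sigma_\lambda$ for all $\rho\in\mathcal T$, i.e. $\mathcal T$ consists of fixed points of an entanglement breaking (measure-and-prepare) channel. *)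

(* Defs.v *)
From mathcomp Require Import all_boot all_order all_algebra.
Set Implicit Arguments. Unset Strict Implicit. Unset Printing Implicit Defensive.
Import Order.TTheory GRing.Theory Num.Theory.
Local Open Scope ring_scope.

(* Scalars: an arbitrary numClosedFieldType C (e.g. the complex numbers);
   the Hilbert space H is C^n, operators are n x n matrices. *)

Definition adjmx (C : numClosedFieldType) (m n : nat) (A : 'M[C]_(m, n)) : 'M[C]_(n, m) :=
  (map_mx Num.conj A)^T.

Definition psdmx (C : numClosedFieldType) (n : nat) (A : 'M[C]_n) : Prop :=
  adjmx A = A /\ forall v : 'cV[C]_n, 0 <= (adjmx v *m A *m v) 0 0.

Definition is_state (C : numClosedFieldType) (n : nat) (rho : 'M[C]_n) : Prop :=
  psdmx rho /\ \tr rho = 1.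

Definition is_povm (C : numClosedFieldType) (n : nat) (K : finType) (M : K -> 'M[C]_n) : Prop :=
  (forall k, psdmx (M k)) /\ \sum_k M k = 1%:M.

Definition no_contextuality_proof (C : numClosedFieldType) (n : nat)
    (T : 'M[C]_n -> Prop) : Prop :=
  exists (L : finType) (G : L -> 'M[C]_n) (sigma : L -> 'M[C]_n),
    is_povm G /\ (forall l, is_state (sigma l)) /\
    forall rho, T rho ->
      forall (K : finType) (M : K -> 'M[C]_n), is_povm M ->
        forall k, \tr (rho *m M k) =
                  \sum_l \tr (rho *m G l) * \tr (sigma l *m M k).

Definition commutative_set (C : numClosedFieldType) (n : nat) (T : 'M[C]_n -> Prop) : Prop :=
  forall rho rho', T rho -> T rho' -> rho *m rho' = rho' *m rho.

(* Main.v *)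
From Stdlib Require Import Classical.
Require Import Defs.
From mathcomp Require Import all_boot all_order all_algebra.
Set Implicit Arguments. Unset Strict Implicit. Unset Printing Implicit Defensive.
Import Order.TTheory GRing.Theory Num.Theory.
Local Open Scope ring_scope.

Section Adj.
Variable C : numClosedFieldType.

Lemma adjmxE m n (A : 'M[C]_(m, n)) i j : adjmx A i j = (A j i)^*.
Proof. by rewrite /adjmx !mxE. Qed.

Lemma adjmxK m n (A : 'M[C]_(m, n)) : adjmx (adjmx A) = A.
Proof. by apply/matrixP => i j; rewrite !adjmxE conjCK. Qed.

Lemma adjmxM m n p (A : 'M[C]_(m, n)) (B : 'M[C]_(n, p)) :
  adjmx (A *m B) = adjmx B *m adjmx A.
Proof.
apply/matrixP => i j; rewrite !mxE rmorph_sum; apply: eq_bigr => k _.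
by rewrite !adjmxE rmorphM mulrC.
Qed.

Lemma adjmxD m n (A B : 'M[C]_(m, n)) : adjmx (A + B) = adjmx A + adjmx B.
Proof. by apply/matrixP => i j; rewrite [RHS]mxE !adjmxE mxE rmorphD. Qed.

Lemma adjmxN m n (A : 'M[C]_(m, n)) : adjmx (- A) = - adjmx A.
Proof. by apply/matrixP => i j; rewrite [RHS]mxE !adjmxE mxE rmorphN. Qed.

Lemma adjmxB m n (A B : 'M[C]_(m, n)) : adjmx (A - B) = adjmx A - adjmx B.
Proof. by rewrite adjmxD adjmxN. Qed.

Lemma adjmxZ m n a (A : 'M[C]_(m, n)) : adjmx (a *: A) = a^* *: adjmx A.
Proof. by apply/matrixP => i j; rewrite [RHS]mxE !adjmxE mxE rmorphM. Qed.

Lemma adjmx_sum m n (I : finType) (F : I -> 'M[C]_(m, n)) :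
  adjmx (\sum_i F i) = \sum_i adjmx (F i).
Proof.
apply/matrixP => i j; rewrite adjmxE !summxE rmorph_sum.
by apply: eq_bigr => k _; rewrite adjmxE.
Qed.

Lemma adjmx0 m n : adjmx (0 : 'M[C]_(m, n)) = 0.
Proof. by apply/matrixP => i j; rewrite adjmxE !mxE rmorph0. Qed.

Lemma adjmx1 n : adjmx (1%:M : 'M[C]_n) = 1%:M.
Proof.
apply/matrixP => i j.
rewrite adjmxE !mxE eq_sym; case: (i == j); by rewrite /= ?conjC1 ?conjC0.
Qed.

Lemma adjmx_tstar n (A : 'M[C]_n) : adjmx A = (A ^t Num.conj)%sesqui.
Proof. by apply/matrixP => i j; rewrite adjmxE !mxE. Qed.

Lemma qform_norm n (x : 'cV[C]_n) :
  (adjmx x *m x) 0 0 = \sum_k `|x k 0| ^+ 2.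
Proof. by rewrite mxE; apply: eq_bigr => k _; rewrite adjmxE normCKC. Qed.

Lemma qform_ge0 n (x : 'cV[C]_n) : 0 <= (adjmx x *m x) 0 0.
Proof. by rewrite qform_norm sumr_ge0 // => k _; rewrite exprn_ge0. Qed.

Lemma qform_eq0 n (x : 'cV[C]_n) : (adjmx x *m x) 0 0 = 0 -> x = 0.
Proof.
rewrite qform_norm => H; apply/matrixP => i j; rewrite ord1 mxE.
have := psumr_eq0P (P := predT) (fun k _ => exprn_ge0 2 (normr_ge0 (x k 0))) H (i := i) isT.
by move/eqP; rewrite expf_eq0 /= normr_eq0 => /eqP.
Qed.

End Adj.

Lemma mxtrace_sum (R : pzSemiRingType) n (I : finType) (P : pred I) (F : I -> 'M[R]_n) :
  \tr (\sum_(i | P i) F i) = \sum_(i | P i) \tr (F i).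
Proof. by apply: (big_morph _ (@mxtraceD _ _) (mxtrace0 _ _)). Qed.

Section Psd.
Variable C : numClosedFieldType.

Lemma mx3_entry m n p q (X : 'M[C]_(m, n)) (Y : 'M[C]_(n, p)) (Z : 'M[C]_(p, q)) i j :
  (X *m Y *m Z) i j = (row i X *m Y *m col j Z) 0 0.
Proof.
rewrite -row_mul [RHS]mxE [LHS]mxE; apply: eq_bigr => k _.
by rewrite !mxE.
Qed.

Lemma adj_row m n (P : 'M[C]_(m, n)) k : adjmx (row k P) = col k (adjmx P).
Proof. by apply/matrixP => i j; rewrite adjmxE !mxE ?adjmxE ?ord1. Qed.

Lemma psd_herm n (A : 'M[C]_n) : psdmx A -> adjmx A = A.
Proof. by case. Qed.

Lemma psd_factor n (A : 'M[C]_n) : psdmx A -> exists W : 'M[C]_n, A = W *m adjmx W.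
Proof.
move=> [hA qA].
have nA : A \is normalmx by apply/normalmxP; rewrite -adjmx_tstar hA.
have /orthomx_spectralP eA := nA.
set P := spectralmx A in eA; set d := spectral_diag A in eA.
have uP : P \is unitarymx by apply: spectral_unitarymx.
have PP : P *m adjmx P = 1%:M by rewrite adjmx_tstar; apply/unitarymxP.
rewrite invmx_unitary // -adjmx_tstar in eA.
have ePA : P *m A *m adjmx P = diag_mx d.
  by rewrite eA !mulmxA PP mul1mx -mulmxA PP mulmx1.
have d0 k : 0 <= d 0 k.
  have := qA (col k (adjmx P)).
  have -> : d 0 k = diag_mx d k k by rewrite mxE eqxx mulr1n.
  by move=> H; rewrite -ePA mx3_entry -adj_row; rewrite -adj_row adjmxK in H.
pose s := \row_k sqrtC (d 0 k).
have adjs : adjmx (diag_mx s) = diag_mx s.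
  apply/matrixP => i j; rewrite adjmxE !mxE; have [->|ne] := eqVneq i j.
    by rewrite !mulr1n geC0_conj // sqrtC_ge0.
  by rewrite !mulr0n conjC0.
exists (adjmx P *m diag_mx s).
rewrite adjmxM adjmxK adjs -mulmxA [diag_mx s *m _]mulmxA mulmx_diag.
have -> : \row_j (s 0 j * s 0 j) = d.
  by apply/matrixP => i j; rewrite ord1 !mxE -expr2 sqrtCK.
by rewrite mulmxA.
Qed.


Lemma row_adj m n (W : 'M[C]_(m, n)) k : row k (adjmx W) = adjmx (col k W).
Proof. by rewrite -[W in RHS]adjmxK -adj_row adjmxK. Qed.

Lemma qform_WW n p (W : 'M[C]_(n, p)) (v : 'cV[C]_n) :
  adjmx v *m (W *m adjmx W) *m v = adjmx (adjmx W *m v) *m (adjmx W *m v).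
Proof. by rewrite adjmxM adjmxK !mulmxA. Qed.

Lemma psd_WW n p (W : 'M[C]_(n, p)) : psdmx (W *m adjmx W).
Proof.
split; first by rewrite adjmxM adjmxK.
by move=> v; rewrite qform_WW qform_ge0.
Qed.

Lemma psd_kernel n (B : 'M[C]_n) (v : 'cV[C]_n) : psdmx B -> (adjmx v *m B *m v) 0 0 = 0 -> B *m v = 0.
Proof.
move=> /psd_factor [Z ->]; rewrite qform_WW => /qform_eq0 H.
by rewrite -mulmxA H mulmx0.
Qed.

Lemma tr_WW_expand n (W B : 'M[C]_n) :
  \tr (W *m adjmx W *m B) = \sum_k (adjmx (col k W) *m B *m col k W) 0 0.
Proof.
rewrite -mulmxA mxtrace_mulC /mxtrace; apply: eq_bigr => k _.
by rewrite [LHS]mx3_entry row_adj.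
Qed.

Lemma tr_psd_ge0 n (A B : 'M[C]_n) : psdmx A -> psdmx B -> 0 <= \tr (A *m B).
Proof.
move=> /psd_factor [W ->] [_ qB]; rewrite tr_WW_expand.
by apply: sumr_ge0 => k _; apply: qB.
Qed.

Lemma tr_psd_zero n (A B : 'M[C]_n) : psdmx A -> psdmx B -> \tr (A *m B) = 0 ->
  B *m A = 0 /\ A *m B = 0.
Proof.
move=> pA pB; have hA := psd_herm pA; have hB := psd_herm pB.
have [W eW] := psd_factor pA; move=> H; rewrite eW tr_WW_expand in H.
have BW : B *m W = 0.
  apply/matrixP => i k.
  have := psd_kernel pB (psumr_eq0P (P := predT) (fun k _ => (proj2 pB) (col k W)) H (i := k) isT).
  move/matrixP/(_ i 0); rewrite !mxE => H2; apply: (etrans _ H2).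
  by apply: eq_bigr => j _; rewrite mxE.
have BA : B *m A = 0 by rewrite eW mulmxA BW mul0mx.
split => //.
by rewrite -hA -hB -adjmxM BA adjmx0.
Qed.

Lemma psd0 n : psdmx (0 : 'M[C]_n).
Proof. by split; [rewrite adjmx0 | move=> v; rewrite mulmx0 mul0mx mxE]. Qed.

Lemma psdD n (A B : 'M[C]_n) : psdmx A -> psdmx B -> psdmx (A + B).
Proof.
move=> [hA qA] [hB qB]; split; first by rewrite adjmxD hA hB.
by move=> v; rewrite mulmxDr mulmxDl mxE addr_ge0.
Qed.

Lemma psdZ n a (A : 'M[C]_n) : 0 <= a -> psdmx A -> psdmx (a *: A).
Proof.
move=> a0 [hA qA]; split; first by rewrite adjmxZ hA geC0_conj.
by move=> v; rewrite -scalemxAr -scalemxAl mxE mulr_ge0.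
Qed.

Lemma psd_sum n (I : finType) (P : pred I) (F : I -> 'M[C]_n) :
  (forall i, P i -> psdmx (F i)) -> psdmx (\sum_(i | P i) F i).
Proof.
move=> H; elim/big_rec: _ => [|i x Pi px]; first exact: psd0.
exact: psdD (H i Pi) px.
Qed.

End Psd.

Section Ext.
Variable C : numClosedFieldType.

Lemma proj_psd1 n (E : 'M[C]_n) : adjmx E = E -> E *m E = E -> psdmx E.
Proof.
move=> hE iE; split => // v.
have -> : adjmx v *m E *m v = adjmx (E *m v) *m (E *m v).
  by rewrite adjmxM hE !mulmxA -[adjmx v *m E *m E]mulmxA iE.
exact: qform_ge0.
Qed.

Lemma proj_psd n (E : 'M[C]_n) : adjmx E = E -> E *m E = E ->
  psdmx E /\ psdmx (1%:M - E).
Proof.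
move=> hE iE; split; first exact: proj_psd1.
apply: proj_psd1; first by rewrite adjmxB adjmx1 hE.
by rewrite mulmxBl !mulmxBr !mul1mx !mulmx1 iE subrr subr0.
Qed.

Lemma tr11 (A : 'M[C]_1) : \tr A = A 0 0.
Proof. by rewrite /mxtrace big_ord1. Qed.

Lemma qzero n (X : 'M[C]_n) :
  (forall E, psdmx E -> psdmx (1%:M - E) -> \tr (X *m E) = 0) ->
  forall u : 'cV[C]_n, adjmx u *m X *m u = 0.
Proof.
move=> H u; have [->|nu] := eqVneq u 0; first by rewrite mulmx0.
set a := (adjmx u *m u) 0 0.
have a0 : a != 0 by apply: contra nu => /eqP /qform_eq0 ->.
have ag : 0 <= a by apply: qform_ge0.
have ua : adjmx u *m u = a%:M by rewrite [LHS]mx11_scalar.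
pose E := a^-1 *: (u *m adjmx u).
have hE : adjmx E = E.
  by rewrite adjmxZ adjmxM adjmxK geC0_conj // invr_ge0.
have iE : E *m E = E.
  rewrite /E -scalemxAl -scalemxAr scalerA mulmxA -[u *m _ *m u]mulmxA ua.
  by rewrite mul_mx_scalar -scalemxAl scalerA -mulrA mulVf // mulr1.
have [p1 p2] := proj_psd hE iE.
have := H E p1 p2; rewrite /E -scalemxAr mxtraceZ mulmxA mxtrace_mulC mulmxA.
move/eqP; rewrite mulf_eq0 invr_eq0 (negPf a0) /= tr11 => /eqP h.
by rewrite [LHS]mx11_scalar h raddf0.
Qed.

Lemma polar n (X : 'M[C]_n) : (forall u : 'cV[C]_n, adjmx u *m X *m u = 0) -> X = 0.
Proof.
move=> H.
pose q (u v : 'cV[C]_n) := adjmx u *m X *m v.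
have ex c u v : q (u + c *: v) (u + c *: v) =
    q u u + c *: q u v + c^* *: q v u + (c^* * c) *: q v v.
  rewrite /q adjmxD adjmxZ !mulmxDl !mulmxDr -!scalemxAl -!scalemxAr !scalerA.
  by rewrite !addrA; congr (_ + _); rewrite -!addrA; congr (_ + _); rewrite addrC.
have sym u v : q u v + q v u = 0.
  by have := ex 1 u v; rewrite /q !H conjC1 !scale1r scaler0 add0r addr0 => <-.
have sym2 u v : q u v = q v u.
  have := ex 'i u v; rewrite /q !H scaler0 add0r addr0 conjCi scaleNr => /esym /eqP.
  rewrite -scalerBr scaler_eq0 (negPf (neq0Ci _)) /= subr_eq0 => /eqP.
  by rewrite -/(q u v) -/(q v u).
apply/matrixP => i j; rewrite mxE.
have e : q (delta_mx i 0) (delta_mx j 0) = 0.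
  have := sym (delta_mx i 0) (delta_mx j 0); rewrite -sym2 => /eqP.
  by rewrite -mulr2n -scaler_nat scaler_eq0 pnatr_eq0 /= => /eqP.
have adjd : adjmx (delta_mx i 0) = delta_mx 0 i :> 'rV[C]_n.
  by apply/matrixP => a b; rewrite adjmxE !mxE andbC; case: (_ && _); rewrite /= ?conjC1 ?conjC0.
move: e; rewrite /q adjd -rowE -colE => /matrixP /(_ 0 0).
by rewrite !mxE.
Qed.

Lemma trace_ext n (X : 'M[C]_n) :
  (forall E, psdmx E -> psdmx (1%:M - E) -> \tr (X *m E) = 0) -> X = 0.
Proof. by move=> H; apply: polar; apply: qzero. Qed.

End Ext.

Section Core.
Variables (C : numClosedFieldType) (n : nat) (L : finType) (G sigma : L -> 'M[C]_n).
Hypotheses (HG : is_povm G) (Hs : forall l, is_state (sigma l)).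

Definition Pq (q : L -> C) : 'M[C]_n := \sum_l q l *: sigma l.
Definition Am (m l : L) := \tr (sigma l *m G m).
Definition statv (q : L -> C) :=
  (forall l, 0 <= q l) /\ (forall m, \tr (Pq q *m G m) = q m).
Definition supp (q : L -> C) := [set l | q l != 0].
Definition closedS (S : {set L}) := forall j m, j \in S -> m \notin S -> Am m j = 0.

Lemma Am_ge0 m l : 0 <= Am m l.
Proof. exact: tr_psd_ge0 (Hs l).1 (HG.1 m). Qed.

Lemma Am_sum l : \sum_m Am m l = 1.
Proof. by rewrite /Am -mxtrace_sum -mulmx_sumr HG.2 mulmx1 (Hs l).2. Qed.

Lemma trPq q m : \tr (Pq q *m G m) = \sum_l q l * Am m l.
Proof.
rewrite /Pq mulmx_suml mxtrace_sum; apply: eq_bigr => l _.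
by rewrite -scalemxAl mxtraceZ.
Qed.

Lemma PqD a b q q' : Pq (fun l => a * q l + b * q' l) = a *: Pq q + b *: Pq q'.
Proof.
rewrite /Pq !scaler_sumr -big_split; apply: eq_bigr => l _.
by rewrite scalerDl !scalerA.
Qed.

Lemma statv_lin a b q q' : statv q -> statv q' ->
  (forall l, 0 <= a * q l + b * q' l) -> statv (fun l => a * q l + b * q' l).
Proof.
move=> [_ h] [_ h'] nn; split => // m.
by rewrite PqD mulmxDl mxtraceD -!scalemxAl !mxtraceZ h h'.
Qed.

Lemma psd_Pq q : (forall l, 0 <= q l) -> psdmx (Pq q).
Proof. by move=> h; apply: psd_sum => l _; apply: psdZ (h l) (Hs l).1. Qed.

Lemma Pq0 q : #|supp q| = 0%N -> Pq q = 0.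
Proof.
move/eqP; rewrite cards_eq0 => /eqP e; apply: big1 => l _.
have : l \notin supp q by rewrite e inE.
by rewrite inE negbK => /eqP ->; rewrite scale0r.
Qed.

Lemma supp_closed q : statv q -> closedS (supp q).
Proof.
move=> [nn h] j m; rewrite !inE negbK => qj /eqP qm.
have := h m; rewrite trPq qm => e.
have := psumr_eq0P (P := predT) (fun l _ => mulr_ge0 (nn l) (Am_ge0 m l)) e (i := j) isT.
by move/eqP; rewrite mulf_eq0 (negPf qj) /= => /eqP.
Qed.

Lemma closedI S S' : closedS S -> closedS S' -> closedS (S :&: S').
Proof.
move=> h h' j m; rewrite !inE => /andP [jS jS'].
by rewrite negb_and => /orP [/(h _ _ jS)|/(h' _ _ jS')].
Qed.

Lemma restr q S : statv q -> closedS S ->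
  statv (fun l => if l \in S then q l else 0).
Proof.
move=> [nn h] cS.
have inS1 l : l \in S -> \sum_(m in S) Am m l = 1.
  move=> lS; rewrite -(Am_sum l) (bigID (mem S) predT) /=.
  by rewrite [X in _ = _ + X]big1 ?addr0 // => m mS; apply: cS.
have key j m : j \notin S -> m \in S -> q j * Am m j = 0.
  have e : \sum_(m in S) q m = \sum_l q l * \sum_(m in S) Am m l.
    rewrite (eq_bigr (fun k => \sum_l q l * Am k l)); last by move=> k _; rewrite -h trPq.
    by rewrite exchange_big /=; apply: eq_bigr => l _; rewrite mulr_sumr.
  rewrite (bigID (mem S) predT) /= in e.
  have e2 : \sum_(l | l \notin S) q l * \sum_(m in S) Am m l = 0.
    move: e; rewrite [X in _ = X + _](eq_bigr (fun l => q l)); last by move=> l /inS1 ->; rewrite mulr1.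
    move/(congr1 (fun x => x - \sum_(i in S) q i)) => /=; rewrite subrr [X in _ = X - _]addrC addrK; by move/esym.
  move=> jS mS.
  have := psumr_eq0P (P := fun l => l \notin S)
    (fun l _ => mulr_ge0 (nn l) (sumr_ge0 _ (fun m _ => Am_ge0 m l))) e2 jS.
  rewrite mulr_sumr => e3.
  exact: (psumr_eq0P (P := mem S) (fun m _ => mulr_ge0 (nn j) (Am_ge0 m j)) e3 mS).
split; first by move=> l; case: (l \in S).
move=> m; rewrite trPq.
rewrite (eq_bigr (fun l => if l \in S then q l * Am m l else 0)); last first.
  by move=> l _; case: (l \in S); rewrite ?mul0r.
rewrite -big_mkcond /=; case: ifP => mS.
  rewrite -(h m) trPq (bigID (mem S) predT) /= [X in _ = _ + X]big1 ?addr0 //.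
  by move=> l lS; apply: key => //.
by apply: big1 => l lS; rewrite (cS l m lS) ?mS ?mulr0.
Qed.

Lemma disj q q' : statv q -> statv q' -> [disjoint supp q & supp q'] ->
  Pq q *m Pq q' = 0 /\ Pq q' *m Pq q = 0.
Proof.
move=> [nn h] [nn' h'] dj.
pose Q := \sum_(m in supp q') G m.
pose Q' := \sum_(m | m \notin supp q') G m.
have QQ : Q + Q' = 1%:M by rewrite /Q /Q' -HG.2 (bigID (mem (supp q')) predT).
have pQ : psdmx Q by apply: psd_sum => m _; apply: HG.1.
have pQ' : psdmx Q' by apply: psd_sum => m _; apply: HG.1.
have t1 : \tr (Pq q *m Q) = 0.
  rewrite /Q mulmx_sumr mxtrace_sum; apply: big1 => m mS'.
  rewrite h; have := disjointFl dj mS'; rewrite inE => /negbT; rewrite negbK => /eqP -> //.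
have t2 : \tr (Pq q' *m Q') = 0.
  rewrite /Q' mulmx_sumr mxtrace_sum; apply: big1 => k.
  by rewrite h' inE negbK => /eqP.
have [z1 z2] := tr_psd_zero (psd_Pq nn) pQ t1.
have [z3 z4] := tr_psd_zero (psd_Pq nn') pQ' t2.
split.
  rewrite -[Pq q'](mul1mx) -QQ mulmxDl mulmxDr mulmxA z2 mul0mx z3 mulmx0.
  by rewrite addr0.
rewrite -[Pq q](mul1mx) -QQ mulmxDl mulmxDr z1 mulmx0 mulmxA z4 mul0mx.
by rewrite addr0.
Qed.


Lemma min_seq (f : L -> C) (s : seq L) : s != [::] -> {in s, forall l, f l \is Num.real} ->
  exists2 l0, l0 \in s & {in s, forall l, f l0 <= f l}.
Proof.
elim: s => [//|a s IH] _ hr.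
have ra : f a \is Num.real by apply: hr; rewrite mem_head.
case: s IH hr => [|b s] IH hr.
  by exists a; rewrite ?mem_head // => l; rewrite inE => /eqP ->.
have [|l1 l1s l1m] := IH isT.
  by move=> l ls; apply: hr; rewrite inE ls orbT.
have r1 : f l1 \is Num.real by apply: hr; rewrite inE l1s orbT.
case/orP: (real_leVge ra r1) => le.
  exists a; first by rewrite mem_head.
  move=> l; rewrite inE => /orP [/eqP ->|ls]; first by [].
  exact: le_trans le (l1m _ ls).
exists l1; first by rewrite inE l1s orbT.
move=> l; rewrite inE => /orP [/eqP ->|ls]; first by [].
exact: l1m.
Qed.

Lemma min_set (f : L -> C) (S : {set L}) : S != set0 -> {in S, forall l, f l \is Num.real} ->
  exists2 l0, l0 \in S & {in S, forall l, f l0 <= f l}.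
Proof.
move=> ne hr.
have h1 : enum S != [::].
  apply: contra ne => /eqP e; apply/eqP/setP => x; rewrite inE -mem_enum e.
  by [].
have h2 : {in enum S, forall l, f l \is Num.real}.
  by move=> l; rewrite mem_enum; apply: hr.
have [l0 l0s l0m] := @min_seq f (enum S) h1 h2.
exists l0; first by rewrite -mem_enum.
by move=> l ls; apply: l0m; rewrite mem_enum.
Qed.

Lemma comm_main_N N : forall q q', (#|supp q| + #|supp q'| <= N)%N ->
  statv q -> statv q' -> Pq q *m Pq q' = Pq q' *m Pq q.
Proof.
elim: N => [|N IH] q q' hN sq sq'.
  have : #|supp q| = 0%N by move: hN; rewrite leqn0 addn_eq0 => /andP [/eqP].
  by move/Pq0 ->; rewrite mul0mx mulmx0.
have split_case p p' : (#|supp p| + #|supp p'| <= N.+1)%N -> statv p -> statv p' ->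
    ~~ (supp p \subset supp p') -> Pq p *m Pq p' = Pq p' *m Pq p.
  move=> hp sp sp' nsub.
  set Cs := supp p :&: supp p'.
  have [e0|ne0] := eqVneq Cs set0.
    have dj : [disjoint supp p & supp p'] by rewrite -setI_eq0 -/Cs e0.
    by have [-> ->] := disj sp sp' dj.
  have cC : closedS Cs by apply: closedI; apply: supp_closed.
  pose p1 := fun l => if l \in Cs then p l else 0.
  pose p2 := fun l => 1 * p l + (-1) * p1 l.
  have sp1 : statv p1 by apply: restr.
  have sp2 : statv p2.
    apply: statv_lin => // l; rewrite /p1 mul1r mulN1r.
    by case: (l \in Cs); rewrite ?subrr ?subr0 //; apply: sp.1.
  have ep : Pq p = Pq p1 + Pq p2.
    by rewrite /p2 PqD scale1r scaleN1r addrC subrK.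
  have [x xC] := set0Pn _ ne0.
  have Cp : Cs \subset supp p by apply: subsetIl.
  have c1 : (#|supp p1| < #|supp p|)%N.
    apply: (@leq_ltn_trans #|Cs|).
      apply: subset_leq_card; apply/subsetP => l; rewrite [l \in supp _]inE /p1; by case: ifP => // _; rewrite eqxx.
    apply: proper_card; rewrite properEneq Cp andbT.
    by apply: contra nsub => /eqP <-; apply: subsetIr.
  have c2 : (#|supp p2| < #|supp p|)%N.
    have xp : x \in supp p by apply: (subsetP Cp).
    rewrite (cardsD1 x (supp p)) xp add1n ltnS.
    apply: subset_leq_card; apply/subsetP => l; rewrite [l \in supp p2]inE /p2 /p1 mul1r mulN1r.
    case: ifP => lC; first by rewrite subrr eqxx.
    rewrite subr0 => pl; rewrite !inE pl andbT; apply: contraFN lC => /eqP ->; exact: xC.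
  have h1 := IH p1 p' (leq_trans (leq_add c1 (leqnn _)) hp) sp1 sp'.
  have h2 := IH p2 p' (leq_trans (leq_add c2 (leqnn _)) hp) sp2 sp'.
  by rewrite ep mulmxDl mulmxDr h1 h2.
case: (boolP (supp q \subset supp q')) => s1; last exact: split_case.
case: (boolP (supp q' \subset supp q)) => s2; last first.
  by apply/esym; apply: split_case => //; rewrite addnC.
have eS : supp q' = supp q by apply/eqP; rewrite eqEsubset s1 s2.
have [e0|ne0] := eqVneq (supp q) set0.
  by rewrite Pq0 ?e0 ?cards0 // mul0mx mulmx0.
have [nn h] := sq; have [nn' h'] := sq'.
have pos' l : l \in supp q -> 0 < q' l.
  by rewrite -eS inE => ql; rewrite lt_def ql nn'.
have [l0 l0S l0m] := @min_set (fun l => q l / q' l) (supp q) ne0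
  (fun l _ => ger0_real (divr_ge0 (nn l) (nn' l))).
pose t := q l0 / q' l0.
pose r := fun l => 1 * q l + (- t) * q' l.
have sr : statv r.
  apply: statv_lin => // l; rewrite mul1r mulNr subr_ge0.
  case: (boolP (l \in supp q)) => lS.
    by rewrite -ler_pdivlMr ?pos' //; apply: l0m.
  have : l \notin supp q' by rewrite eS.
  by move: lS; rewrite !inE !negbK => /eqP -> /eqP ->; rewrite mulr0.
have cr : (#|supp r| < #|supp q|)%N.
  rewrite (cardsD1 l0 (supp q)) l0S add1n ltnS.
  apply: subset_leq_card; apply/subsetP => l; rewrite !inE /r mul1r mulNr.
  case: (eqVneq l l0) => [->|nl] /=.
    by rewrite /t divfK ?subrr ?eqxx // lt0r_neq0 // pos'.
  apply: contraNN => /eqP ql.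
  have : l \notin supp q' by rewrite eS inE ql eqxx.
  by rewrite inE negbK ql => /eqP ->; rewrite mulr0 subrr.
have er : Pq q = Pq r + t *: Pq q'.
  by rewrite /r PqD scale1r scaleNr addrNK.
have hr := IH r q' (leq_trans (leq_add cr (leqnn _)) hN) sr sq'.
by rewrite er mulmxDl mulmxDr hr -scalemxAl -scalemxAr.
Qed.

Lemma comm_main q q' : statv q -> statv q' -> Pq q *m Pq q' = Pq q' *m Pq q.
Proof. by apply: comm_main_N (leqnn _). Qed.

End Core.

Section Span.
Variables (C : numClosedFieldType) (n : nat) (T : 'M[C]_n -> Prop).

Lemma dim_grow (x : 'M[C]_n) (s : seq 'M[C]_n) : x \notin <<s>>%VS ->
  (\dim <<s>> < \dim <<x :: s>>)%N.
Proof.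
move=> nx; rewrite span_cons ltnNge; apply: contra nx => le.
have : (<<s>> == <[x]> + <<s>>)%VS by rewrite eqEdim addvSr le.
move/eqP ->; apply: (subvP (addvSl _ _)); exact: memv_line.
Qed.

Lemma span_exists : exists s : seq 'M[C]_n, (forall x, x \in s -> T x) /\
  forall rho, T rho -> rho \in <<s>>%VS.
Proof.
apply: NNPP => H.
have NS : forall s : seq 'M[C]_n, (forall x, x \in s -> T x) ->
    exists rho, T rho /\ rho \notin <<s>>%VS.
  move=> s hs; apply: NNPP => H2; apply: H; exists s; split => // rho Tr.
  apply: NNPP => nr; apply: H2; exists rho; split => //; exact/negP.
have grow : forall k, exists s : seq 'M[C]_n, (forall x, x \in s -> T x) /\ (k <= \dim <<s>>)%N.
  elim => [|k [s [hs hk]]]; first by exists [::].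
  have [rho [Tr nr]] := NS s hs.
  exists (rho :: s); split.
    by move=> x; rewrite inE => /orP [/eqP ->|/hs].
  exact: leq_ltn_trans hk (dim_grow nr).
have [s [_ hk]] := grow (\dim (fullv : {vspace 'M[C]_n})).+1.
have := dimvS (subvf <<s>>%VS).
by rewrite leqNgt hk.
Qed.

End Span.

Section Back.
Variables (C : numClosedFieldType) (n : nat).

Lemma tr_delta (A : 'M[C]_n) l : \tr (A *m delta_mx l l) = A l l.
Proof.
rewrite -(mul_delta_mx (0 : 'I_1)) mulmxA -colE mxtrace_mulC -rowE tr11.
by rewrite !mxE.
Qed.

Lemma adj_delta l : adjmx (delta_mx l l : 'M[C]_n) = delta_mx l l.
Proof.
apply/matrixP => i j; rewrite adjmxE !mxE andbC.
by case: (_ && _); rewrite /= ?conjC1 ?conjC0.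
Qed.

Lemma sum_delta : \sum_l (delta_mx l l : 'M[C]_n) = 1%:M.
Proof.
have -> : (1%:M : 'M[C]_n) = diag_mx (\row_j 1).
  by apply/matrixP => i j; rewrite !mxE.
by rewrite diag_mx_sum_delta; apply: eq_bigr => l _; rewrite mxE scale1r.
Qed.

End Back.

Lemma backward (C : numClosedFieldType) (n : nat) (T : 'M[C]_n -> Prop)
  (HT : forall rho, T rho -> is_state rho) :
  commutative_set T -> no_contextuality_proof T.
Proof.
move=> Hc.
have [s [hs hspan]] := span_exists T.
have [P uP /allP aP] := @cotrigonalization C n s (fun A B hA hB => Hc A B (hs A hA) (hs B hB)).
have PP : P *m adjmx P = 1%:M by rewrite adjmx_tstar; apply/unitarymxP.
have iP : invmx P = adjmx P by rewrite invmx_unitary // adjmx_tstar.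
have PuP : adjmx P *m P = 1%:M by rewrite -iP mulVmx // unitarymx_unit.
have herm rho : T rho -> adjmx rho = rho by move/HT => [[]].
have diag_s A : A \in s -> forall i j, i != j -> (P *m A *m adjmx P) i j = 0.
  move=> As i j nij.
  have tr : is_trig_mx (P *m A *m adjmx P).
    by have := aP A As; rewrite /= /similar_to conjumx ?unitarymx_unit // iP.
  have hD : adjmx (P *m A *m adjmx P) = P *m A *m adjmx P.
    by rewrite !adjmxM adjmxK herm ?mulmxA //; apply: hs.
  case: (ltngtP i j) => [lt|gt|/val_inj e]; last by rewrite e eqxx in nij.
    by move/is_trig_mxP: tr; apply.
  move/is_trig_mxP: tr => tr.
  by rewrite -hD adjmxE tr // conjC0.
have diag0 rho : T rho -> forall i j, i != j -> (P *m rho *m adjmx P) i j = 0.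
  move=> Tr i j nij; have := @coord_span _ _ _ (in_tuple s) rho (hspan rho Tr) => e.
  rewrite [in LHS]e mulmx_sumr mulmx_suml summxE; apply: big1 => k _.
  rewrite -scalemxAr -scalemxAl mxE diag_s ?mulr0 //.
  by apply: mem_nth; rewrite (ltn_ord k).
pose G (l : 'I_n) := adjmx P *m delta_mx l l *m P.
have hG l : adjmx (G l) = G l by rewrite /G !adjmxM adjmxK adj_delta mulmxA.
have iG l : G l *m G l = G l.
  by rewrite /G -!mulmxA [P *m _]mulmxA PP mul1mx [delta_mx l l *m (_ *m P)]mulmxA mul_delta_mx.
have pG l : psdmx (G l) by apply: proj_psd1.
have sG : \sum_l G l = 1%:M.
  by rewrite /G -mulmx_suml -mulmx_sumr sum_delta mulmx1.
have trG l : \tr (G l) = 1.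
  by rewrite /G mxtrace_mulC mulmxA PP tr_delta mxE eqxx.
exists ('I_n : finType), G, G; split; first by split.
split; first by move=> l; split.
move=> rho Tr K M HM k.
set D := P *m rho *m adjmx P.
have eD : rho = adjmx P *m D *m P.
  by rewrite /D !mulmxA PuP mul1mx -mulmxA PuP mulmx1.
have trl l : \tr (rho *m G l) = D l l.
  rewrite /G !mulmxA mxtrace_mulC !mulmxA -/D.
  by rewrite -[P *m rho *m adjmx P *m _]/(D *m _) tr_delta.
have eS : \sum_l \tr (rho *m G l) *: G l = rho.
  rewrite (eq_bigr (fun l => adjmx P *m (D l l *: delta_mx l l) *m P)); last first.
    by move=> l _; rewrite trl /G scalemxAl scalemxAr.
  rewrite -mulmx_suml -mulmx_sumr.
  have -> : \sum_l D l l *: delta_mx l l = D.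
    have -> : \sum_l D l l *: delta_mx l l = diag_mx (\row_l D l l).
      by rewrite diag_mx_sum_delta; apply: eq_bigr => l _; rewrite [(\row_l _) 0 l]mxE.
    apply/matrixP => i j; rewrite [LHS]mxE [(\row_l _) 0 i]mxE.
    case: (eqVneq i j) => [->|nij]; first by rewrite mulr1n.
    by rewrite mulr0n (diag0 rho Tr i j nij).
  by rewrite -eD.
rewrite -{1}eS mulmx_suml mxtrace_sum; apply: eq_bigr => l _.
by rewrite -scalemxAl mxtraceZ.
Qed.

Lemma forward (C : numClosedFieldType) (n : nat) (T : 'M[C]_n -> Prop)
  (HT : forall rho, T rho -> is_state rho) :
  no_contextuality_proof T -> commutative_set T.
Proof.
move=> [L [G [sigma [HG [Hs Htr]]]]] rho rho' Tr Tr'.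
have key r : T r -> r = Pq sigma (fun l => \tr (r *m G l)) /\
    statv G sigma (fun l => \tr (r *m G l)).
  move=> Trr.
  have er : r = Pq sigma (fun l => \tr (r *m G l)).
    apply/eqP; rewrite -subr_eq0; apply/eqP; apply: trace_ext => E pE pE'.
    pose M := fun b : bool => if b then E else 1%:M - E.
    have HM : is_povm M.
      by split; [case | rewrite big_bool /= addrC subrK].
    have := Htr r Trr _ M HM true; rewrite /= => e.
    rewrite mulmxBl raddfB /= e /Pq mulmx_suml mxtrace_sum.
    rewrite [X in _ - X](eq_bigr (fun l => \tr (r *m G l) * \tr (sigma l *m E))) ?subrr //.
    by move=> l _; rewrite -scalemxAl mxtraceZ.
  split => //; split.
    by move=> l; apply: tr_psd_ge0 (HT r Trr).1 (HG.1 l).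
  by move=> m; rewrite -er.
have [e1 s1] := key rho Tr; have [e2 s2] := key rho' Tr'.
by have := comm_main HG Hs s1 s2; rewrite -e1 -e2.
Qed.

Unset Implicit Arguments.

Theorem corollary2 (C : numClosedFieldType) (n : nat) (T : 'M[C]_n -> Prop)
  (HT : forall rho, T rho -> is_state rho) :
  no_contextuality_proof T <-> commutative_set T.
Proof. by split; [apply: forward | apply: backward]. Qed.
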